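(* Let $G(\mathcal V,\mathcal E)$ be a finite simple directed graph with $|\mathcal V|\ge 2$ and let $f>0$ be an integer. Suppose that for every partition $X,Y,Z$ of $\mathcal V$ with $X,Y$ non-empty and $|Z|\le f$, either $X \Rightarrow_{\mathcal V - Z} Y$ or $Y \Rightarrow_{\mathcal V - Z} X$. Let $F\subseteq\mathcal V$ with $|F|\le f$, and let $A,B$ be a partition of $\mathcal V-F$ into non-empty sets with $A \Rightarrow_{\mathcal V - F} B$. Then: (1) if it is not the case that $B \Rightarrow_{\mathcal V - F} A$, there exists a non-empty set $S\subseteq A$ such that $S \Rightarrow_{\mathcal V - F} \mathcal V-F-S$ and $S$ is strongly connected in $G_{-F}$; (2) if $B \Rightarrow_{\mathcal V - F} A$, there exists a non-empty set $S\subseteq A\cup B$ such that $S \Rightarrow_{\mathcal V - F} \mathcal V-F-S$, $S$ is strongly connected in $G_{-F}$, and $A \Rightarrow_{\mathcal V - F} S-A$; (3) every node of $F$ has at least $f+1$ incoming neighbors in $\mathcal V-F$.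
   Context: An $(X,y)$-path is a directed path from some node of $X$ to the node $y\notin X$; it excludes $F$ if it contains no node of $F$; $(X,y)$-paths are disjoint if they pairwise share only $y$. For pairwise disjoint $X,Y,F\subseteq\mathcal V$ with $|F|\le f$, $X \Rightarrow_{\mathcal V - F} Y$ means: $Y=\emptyset$, or every $y\in Y$ has at least $f+1$ pairwise disjoint $(X,y)$-paths excluding $F$. $G_{-F}$ is the graph obtained from $G$ by deleting the nodes of $F$ and all edges incident to them. A set $S\subseteq\mathcal V-F$ is strongly connected in $G_{-F}$ if for all $i,j\in S$ there is a directed $(i,j)$-path in $G_{-F}$. A node $i$ is an incoming neighbor of $k$ if $(i,k)\in\mathcal E$. *)

(* Defs.v *)
From mathcomp Require Import all_boot.
Set Implicit Arguments. Unset Strict Implicit. Unset Printing Implicit Defensive.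

(* A finite simple directed graph: node set T (a finType), edge relation e,
   where e i k means (i,k) is an edge (i -> k).  Simplicity = no self-loops
   (multi-edges are impossible with a relation). *)

Section Paths.
Variables (T : finType) (e : rel T).

Definition dpath (p : seq T) : bool :=
  if p is x :: q then path e x q && uniq p else false.

Definition Xy_path (X : {set T}) (y : T) (p : seq T) : bool :=
  [&& dpath p, head y p \in X & last y p == y].

Definition excludes (F : {set T}) (p : seq T) : bool :=
  all (fun v => v \notin F) p.

Definition disjoint_paths (y : T) (ps : seq (seq T)) : Prop :=
  forall i j, i < j < size ps ->
    forall v, v \in nth [::] ps i -> v \in nth [::] ps j -> v = y.

Definition reach (f : nat) (F X Y : {set T}) : Prop :=
  Y = set0 \/
  forall y, y \in Y ->
    exists ps : seq (seq T),
      [/\ f.+1 <= size ps,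
          all (fun p => Xy_path X y p && excludes F p) ps &
          disjoint_paths y ps].

Definition strongly_connected_minus (F S : {set T}) : Prop :=
  forall i j, i \in S -> j \in S ->
    connect [rel u v | [&& e u v, u \notin F & v \notin F]] i j.

End Paths.

(* Main.v *)
From Stdlib Require Import Classical.
Require Import Defs.
From mathcomp Require Import all_boot.
Set Implicit Arguments. Unset Strict Implicit. Unset Printing Implicit Defensive.
Section Menger.
Variable T : finType.
Implicit Types (g : rel T) (A B C S : {set T}) (p q : seq T).

Definition avoid g C : rel T := [rel u v | [&& g u v, u \notin C & v \notin C]].
Definition walk g A B p :=
  if p is a :: q then [&& path g a q, a \in A & last a q \in B] else false.
Definition sep g A B C := forall a b, a \in A -> b \in B -> a \notin C -> b \notin C ->
  ~~ connect (avoid g C) a b.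
Definition dfam (ps : seq (seq T)) := pairwise (fun p q => [disjoint p & q]) ps.
Definition nedges g := #|[set uv : T * T | g uv.1 uv.2]|.

Lemma conn_src (r : rel T) (P : pred T) u v :
  connect r u v -> (forall a b, r a b -> P a) -> P v -> P u.
Proof.
move=> /connectP [[|b p] Hp ->] HP //= Pv.
by move: Hp => /= /andP [/HP].
Qed.

Lemma conn_tgt (r : rel T) (P : pred T) u v :
  connect r u v -> (forall a b, r a b -> P b) -> P u -> P v.
Proof.
move=> /connectP [p Hp ->] HP; elim: p u Hp => //= b p IH u /andP [rub Hp] _.
exact: IH Hp (HP _ _ rub).
Qed.

Lemma path_all_tgt (r : rel T) (P : pred T) a p :
  path r a p -> (forall u v, r u v -> P v) -> all P p.
Proof.
move=> Hp HP; elim: p a Hp => //= b p IH a /andP [rab Hp].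
by rewrite (HP _ _ rab) (IH b Hp).
Qed.

Lemma path_avoid g C a p : path g a p -> all (fun v => v \notin C) (a :: p) ->
  path (avoid g C) a p.
Proof.
elim: p a => //= b p IH a /andP [gab Hp] /and3P [aC bC Hall].
by rewrite /avoid /= gab aC bC IH //= bC.
Qed.

Lemma first_hit (r : rel T) (P : pred T) a p : path r a p -> has P (a :: p) ->
  exists2 s, P s & exists2 q, path [rel u v | r u v && ~~ P u] a q & last a q = s.
Proof.
elim: p a => [|b p IH] a /=; first by rewrite ?orbF => _ Pa; exists a => //; exists [::].
move=> /andP [rab Hp]; case Pa: (P a) => /= Hh.
  by exists a => //; exists [::].
have [s Ps [q Hq Hl]] := IH b Hp Hh.
by exists s => //; exists (b :: q); rewrite /= ?rab ?Pa.
Qed.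

Lemma path_tgt_notin (r : rel T) (P : pred T) a p : path r a p -> ~~ has P p ->
  path [rel u v | r u v && ~~ P v] a p.
Proof.
elim: p a => //= b p IH a /andP [rab Hp]; rewrite negb_or => /andP [Pb Hh].
by rewrite rab Pb IH.
Qed.

Lemma last_hit (r : rel T) (P : pred T) a p : path r a p -> has P (a :: p) ->
  exists2 s, P s & exists2 q, path [rel u v | r u v && ~~ P v] s q & last s q = last a p.
Proof.
elim: p a => [|b p IH] a /=; first by rewrite ?orbF => _ Pa; exists a => //; exists [::].
move=> /andP [rab Hp]; case Hh: (has P (b :: p)).
  by have [s Ps [q Hq Hl]] := IH b Hp Hh; exists s => //; exists q.
move: (Hh) => /= -> ; rewrite orbF => Pa; exists a => //; exists (b :: p) => //.
apply: (@path_tgt_notin r P a (b :: p)); [by rewrite /= rab Hp | by rewrite Hh].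
Qed.

Lemma conn_pre g S a q v : path g a q -> all (fun u => u \notin S) (belast a q) ->
  v \in a :: q -> v \notin S -> connect (avoid g S) a v.
Proof.
elim: q a => [|b q IH] a /=.
  by move=> _ _; rewrite inE => /eqP -> _; apply: connect0.
move=> /andP [gab Hp] /andP [aS Hb]; rewrite inE => /orP [/eqP -> _|vin vS].
  exact: connect0.
have bS : b \notin S.
  by case: q {IH Hp} Hb vin => [|c q] /=; [rewrite inE => _ /eqP <- | case/andP].
apply: (connect_trans _ (IH b Hp Hb vin vS)); apply: connect1; by rewrite /avoid /= gab aS bS.
Qed.

Lemma conn_suf g S b r v : path g b r -> all (fun u => u \notin S) r ->
  v \in b :: r -> v \notin S -> connect (avoid g S) v (last b r).
Proof.
elim: r b v => [|c r IH] b v /=.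
  by move=> _ _; rewrite inE => /eqP -> _; apply: connect0.
move=> /andP [gbc Hp] /andP [cS Hr]; rewrite inE => /orP [/eqP -> vS|vin vS].
  apply: (connect_trans _ (IH c c Hp Hr (mem_head _ _) cS)); apply: connect1.
  by rewrite /avoid /= gbc vS cS.
exact: IH.
Qed.

Fixpoint pref (P : pred T) a q := if P a then [::] else
  if q is b :: q' then b :: pref P b q' else [::].

Lemma pref_path g P a q : path g a q -> path g a (pref P a q).
Proof.
elim: q a => [|b q IH] a /=; first by case: (P a).
by case: (P a) => //= /andP [-> /IH].
Qed.

Lemma pref_last P a q : has P (a :: q) -> P (last a (pref P a q)).
Proof.
elim: q a => [|b q IH] a /=; first by rewrite orbF => Pa; rewrite Pa.
by case Pa: (P a) => //= /IH.
Qed.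

Lemma pref_belast P a q : all (predC P) (belast a (pref P a q)).
Proof.
elim: q a => [|b q IH] a /=; first by case: (P a).
by case Pa: (P a) => //=; rewrite Pa IH.
Qed.

Lemma pref_sub P a q : {subset pref P a q <= q}.
Proof.
elim: q a => [|b q IH] a /=; first by case: (P a).
case: (P a) => // v; rewrite !inE => /orP [->//|/IH ->]; by rewrite orbT.
Qed.

Fixpoint suf (P : pred T) a q : T * seq T :=
  if q is b :: q' then (if has P q then suf P b q' else (a, q)) else (a, [::]).

Lemma suf_path g P a q : path g a q -> path g (suf P a q).1 (suf P a q).2.
Proof.
elim: q a => [|b q IH] a //=; case: ifP => // _ /andP [_ /IH] //.
Qed.

Lemma suf_last P a q : last (suf P a q).1 (suf P a q).2 = last a q.
Proof. elim: q a => [|b q IH] a //=; case: ifP => // _; exact: IH. Qed.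

Lemma suf_head P a q : has P (a :: q) -> P (suf P a q).1.
Proof.
elim: q a => [|b q IH] a /=; first by rewrite orbF.
by case: ifP => [H _|/negbT H]; [exact: IH | by move=> /orP [|]].
Qed.

Lemma suf_nohas P a q : ~~ has P (suf P a q).2.
Proof. elim: q a => [|b q IH] a //=; case: ifP => // /negbT. by []. Qed.

Lemma suf_headin P a q : (suf P a q).1 \in a :: q.
Proof.
elim: q a => [|b q IH] a /=; first exact: mem_head.
case: ifP => _; last exact: mem_head.
by rewrite inE (IH b) orbT.
Qed.

Lemma suf_sub P a q : {subset (suf P a q).2 <= q}.
Proof.
elim: q a => [|b q IH] a //=; case: ifP => // _ v Hv.
by rewrite inE (IH b v Hv) orbT.
by [].
Qed.


Lemma disjP (s1 s2 : seq T) : (forall v, v \in s1 -> v \in s2 -> False) -> [disjoint s1 & s2].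
Proof.
move=> H; rewrite disjoint_has; apply/hasPn => v v1; apply/negP => v2; exact: H v v1 v2.
Qed.

Lemma dfam_mem ps : dfam ps -> forall p q, p \in ps -> q \in ps -> p != q -> [disjoint p & q].
Proof.
elim: ps => //= p0 ps IH /andP [H0 Hp] p q; rewrite !inE.
move=> /orP [/eqP->|pin] /orP [/eqP->|qin]; rewrite ?eqxx //.
- by move=> _; exact: (allP H0 q qin).
- by move=> _; rewrite disjoint_sym; exact: (allP H0 p pin).
- exact: IH.
Qed.

Lemma heads_uniq y ps : dfam ps -> all (fun p => p != [::]) ps -> uniq (map (head y) ps).
Proof.
elim: ps => //= p ps IH /andP [H0 Hp] /andP [pn Hn]; rewrite IH // andbT.
apply/mapP => -[q qin hq]; move: (allP Hn q qin) (allP H0 q qin).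
clear IH H0 Hp Hn; case: p pn hq => // a p _; case: q qin => // b q qin /= -> _.
by rewrite disjoint_cons mem_head.
Qed.

Lemma cover (Y : {set T}) y qs : dfam qs -> all (fun q => q != [::]) qs ->
  all (fun q => head y q \in Y) qs -> #|Y| <= size qs ->
  forall s, s \in Y -> has (fun q => head y q == s) qs.
Proof.
move=> Hd Hn Hh Hc s sY.
have U := heads_uniq y Hd Hn.
have sub : {subset map (head y) qs <= Y} by move=> v /mapP [q qin ->]; exact: allP Hh q qin.
have E : #|map (head y) qs| = size qs by move/card_uniqP: U; rewrite size_map.
have [Hle Heq] := subset_leqif_card (introT subsetP sub).
have : #|map (head y) qs| == #|Y| by rewrite eqn_leq Hle E Hc.
rewrite Heq => /subsetP /(_ s sY) /mapP [q qin ->]; apply/hasP; by exists q.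
Qed.

Lemma menger0 g A B k : nedges g = 0 -> (forall C, sep g A B C -> k <= #|C|) ->
  exists ps, [/\ size ps = k, all (walk g A B) ps & dfam ps].
Proof.
move=> H0 Hs.
have noe u v : g u v = false.
  apply/negbTE/negP => guv; have : (u, v) \in [set uv : T * T | g uv.1 uv.2] by rewrite inE.
  by rewrite (cards0_eq H0) inE.
have Hk : k <= #|A :&: B|.
  apply: Hs => a b aA bB aC _; apply/negP => /connectP [[|c p] Hp Hb].
    by move: Hb => /= Hb; subst b; rewrite inE aA bB in aC.
  by move: Hp => /= /andP []; rewrite /avoid /= noe.
exists [seq [:: v] | v <- take k (enum (A :&: B))]; split.
- by rewrite size_map size_takel // -cardE.
- apply/allP => p /mapP [v /mem_take]; rewrite mem_enum inE => /andP [vA vB] -> /=.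
  by rewrite vA vB.
- rewrite /dfam pairwise_map.
  apply: (sub_pairwise (r := [rel u v | u != v])); last first.
    by rewrite -uniq_pairwise take_uniq // enum_uniq.
  by move=> u v /= uv; rewrite disjoint_cons inE disjoint_has /= andbT.
Qed.


Lemma glue g g' A B S x y k ps qs :
  subrel g' g -> g x y -> x \notin S -> y \notin S -> #|S|.+1 = k ->
  sep g' A B S ->
  size ps = k -> all (walk g' A (x |: S)) ps -> dfam ps ->
  all (fun p => all (fun u => u \notin x |: S) (belast (head x p) (behead p))) ps ->
  size qs = k -> all (walk g' (y |: S) B) qs -> dfam qs ->
  all (fun q => all (fun u => u \notin y |: S) (behead q)) qs ->
  exists rs, [/\ size rs = k, all (walk g A B) rs & dfam rs].
Proof.
move=> sub gxy xS yS Hk Hsep sps wps dps tps sqs wqs dqs tqs.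
have notS (z : T) (Z : {set T}) u : u \notin z |: Z -> u \notin Z.
  by rewrite in_setU1 negb_or => /andP [].
have cross p q v : p \in ps -> q \in qs -> v \in p -> v \in q ->
    [/\ v \in S, v = last x p & v = head y q].
  move=> pin qin vp vq.
  move: (allP wps p pin) (allP tps p pin) vp; case: p pin => // a p0 pin /and3P [hp aA lA] hb vp.
  move: (allP wqs q qin) (allP tqs q qin) vq; case: q qin => // b r qin /and3P [hq bY lB] hr vq.
  case vS: (v \in S); last first.
    have c1 := conn_pre hp (sub_all (@notS x S) hb) vp (negbT vS).
    have c2 := conn_suf hq (sub_all (@notS y S) hr) vq (negbT vS).
    have aS : a \notin S.
      apply: (conn_src (P := fun u => u \notin S) c1) (negbT vS).
      by move=> u w /and3P [].
    have lS : last b r \notin S.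
      apply: (conn_tgt (P := fun u => u \notin S) c2) (negbT vS).
      by move=> u w /and3P [].
    by have := Hsep _ _ aA lB aS lS; rewrite (connect_trans c1 c2).
  split => //.
    have vp' : v \in rcons (belast a p0) (last a p0) by rewrite -lastI.
    move: vp'; rewrite mem_rcons inE => /orP [/eqP -> //|vb].
    by have := allP hb v vb; rewrite in_setU1 vS orbT.
  move: vq; rewrite inE => /orP [/eqP -> //|vb].
  by have := allP hr v vb; rewrite in_setU1 vS orbT.
have lastin p : p \in ps -> last x p \in x |: S.
  by move=> pin; move: (allP wps p pin); case: p pin => // a p0 _ /and3P [].
have lastp p : p \in ps -> last x p \in p.
  by move=> pin; move: (allP wps p pin); case: p pin => // a p0 _ _ /=; exact: mem_last.
pose m p := if last x p == x then y else last x p.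
have hm p : p \in ps -> m p \in y |: S.
  move=> pin; rewrite /m; case: eqP => [_|nx]; first by rewrite setU11.
  by move: (lastin p pin); rewrite !in_setU1 => /orP [/eqP//|->]; rewrite orbT.
have qsne : all (fun q => q != [::]) qs.
  by apply/allP => q qin; move: (allP wqs q qin); case: q qin.
have qshd : all (fun q => head y q \in y |: S) qs.
  by apply/allP => q qin; move: (allP wqs q qin); case: q qin => // b r _ /and3P [].
have cardY : #|y |: S| <= size qs by rewrite cardsU1 yS sqs -Hk.
pose qsel p := nth [::] qs (find (fun q => head y q == m p) qs).
have hq p : p \in ps -> qsel p \in qs /\ head y (qsel p) = m p.
  move=> pin; have Hh := cover dqs qsne qshd cardY (hm p pin).
  split; first by rewrite /qsel mem_nth // -has_find.
  by apply/eqP; exact: (nth_find [::] Hh).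
pose rest p := if last x p == x then qsel p else behead (qsel p).
have restsub p : {subset rest p <= qsel p}.
  by rewrite /rest; case: ifP => _ v //; exact: mem_behead.
have lastdiff p1 p2 : p1 \in ps -> p2 \in ps -> [disjoint p1 & p2] -> last x p1 != last x p2.
  move=> p1in p2in D; apply/negP => /eqP E.
  by have := disjointFr D (lastp p1 p1in); rewrite E (lastp p2 p2in).
have helper p1 p2 : p1 \in ps -> p2 \in ps -> [disjoint p1 & p2] -> [disjoint p1 & rest p2].
  move=> p1in p2in D; apply: disjP => v v1 /restsub v2.
  have [qin hd] := hq p2 p2in.
  have [vS vl vh] := cross p1 (qsel p2) v p1in qin v1 v2.
  move: hd; rewrite -vh /m; case: eqP => [_ E|nx E].
    by move: yS; rewrite -E vS.
  by move: (lastdiff p1 p2 p1in p2in D); rewrite -vl E eqxx.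
exists (map (fun p => p ++ rest p) ps); split.
- by rewrite size_map.
- apply/allP => _ /mapP [p pin ->].
  have [qin hd] := hq p pin.
  have wq := allP wqs _ qin; have wp := allP wps p pin.
  rewrite /rest; move: hd wq; rewrite /m; case: (qsel p) => [|b r] //= hd /and3P [hq0 _ lB].
  clear qin; case: p pin wp hd => // a p0 _ /and3P [hp aA _] /= hd.
  rewrite aA /= cat_path last_cat (sub_path sub hp) /=.
  case: eqP hd => [lx hb|nx hb] /=; subst b.
    by rewrite lx gxy (sub_path sub hq0) lB.
  by rewrite (sub_path sub hq0) lB.
- rewrite /dfam pairwise_map.
  apply: (sub_in_pairwise (P := mem ps)); last 2 first.
  + by apply/allP.
  + exact: dps.
  move=> p1 p2 p1in p2in /= D.
  have D' : [disjoint p2 & p1] by rewrite disjoint_sym.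
  apply: disjP => v; rewrite !mem_cat => /orP [v1|v1] /orP [v2|v2].
  + by rewrite (disjointFr D v1) in v2.
  + by rewrite (disjointFr (helper p1 p2 p1in p2in D) v1) in v2.
  + by rewrite (disjointFr (helper p2 p1 p2in p1in D') v2) in v1.
  have [q1in hd1] := hq p1 p1in; have [q2in hd2] := hq p2 p2in.
  have ne : qsel p2 != qsel p1.
    apply/negP => /eqP E; move: hd1; rewrite -E hd2 /m.
    have L := lastdiff p1 p2 p1in p2in D.
    have l1 := lastin p1 p1in; have l2 := lastin p2 p2in.
    case: eqP => [e2|n2]; case: eqP => [e1|n1] //.
    + by move: L; rewrite e1 e2 eqxx.
    + move=> E2; move: l1; rewrite in_setU1 (negbTE (introN eqP n1)) /= -E2 => yS'.
      by rewrite yS' in yS.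
    + move=> E2; move: l2; rewrite in_setU1 (negbTE (introN eqP n2)) /= E2 => yS'.
      by rewrite yS' in yS.
    + by move=> E2; move: L; rewrite E2 eqxx.
  have := dfam_mem dqs q2in q1in ne.
  by move/disjointFr => /(_ v (restsub _ _ v2)); rewrite (restsub _ _ v1).
Qed.


Lemma dfam_map (h : seq T -> seq T) ps : (forall p, {subset h p <= p}) -> dfam ps -> dfam (map h ps).
Proof.
move=> H; rewrite /dfam pairwise_map; apply: sub_pairwise => p1 p2 D /=.
apply: disjP => v v1 v2; by have := H _ _ v2; rewrite (disjointFr D (H _ _ v1)).
Qed.

Definition trimP (P : pred T) p := if p is a :: q then a :: pref P a q else [::].
Definition trimQ (P : pred T) p :=
  if p is a :: q then (suf P a q).1 :: (suf P a q).2 else [::].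

Theorem menger n : forall g A B k, irreflexive g -> nedges g <= n ->
  (forall C, sep g A B C -> k <= #|C|) ->
  exists ps, [/\ size ps = k, all (walk g A B) ps & dfam ps].
Proof.
elim: n => [|n IH] g A B k irr hn Hs.
  by apply: menger0 Hs; apply/eqP; rewrite -leqn0.
case: (posnP (nedges g)) => [H0|]; first exact: menger0 H0 Hs.
rewrite /nedges card_gt0 => /set0Pn [[x y]]; rewrite inE /= => gxy.
have xy : x != y by apply/eqP => E; rewrite E irr in gxy.
pose g' := [rel u v | g u v && ((u, v) != (x, y))].
have sub : subrel g' g by move=> u v /andP [].
have irr' : irreflexive g' by move=> u; rewrite /= irr.
have hn' : nedges g' <= n.
  have E : [set uv : T * T | g' uv.1 uv.2] = [set uv : T * T | g uv.1 uv.2] :\ (x, y).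
    by apply/setP => -[u v]; rewrite !inE /= andbC.
  rewrite /nedges E -ltnS; apply: leq_trans hn; apply: proper_card; apply: properD1.
  by rewrite inE.
case: (classic (exists S, sep g' A B S /\ #|S| < k)); last first.
  move=> NS; have [ps [sps wps dps]] : exists ps, [/\ size ps = k, all (walk g' A B) ps & dfam ps].
    apply: IH irr' hn' _ => C HC; rewrite leqNgt; apply/negP => lt.
    by apply: NS; exists C.
  exists ps; split => //; apply/allP => p pin; move: (allP wps p pin).
  by case: p pin => // a p _ /and3P [hp aA lB] /=; rewrite (sub_path sub hp) aA lB.
move=> [S [HS ltS]].
have sepU z : (forall p a, path g a p -> ~~ path g' a p -> z \in a :: p) ->
    sep g A B (z |: S).
  move=> Hz a b aA bB aZ bZ; apply/negP => /connectP [p Hp Hb].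
  have aS : a \notin S by move: aZ; rewrite in_setU1 negb_or => /andP [].
  have bS : b \notin S by move: bZ; rewrite in_setU1 negb_or => /andP [].
  have Hall : all (fun v => v \notin z |: S) (a :: p).
    apply/allP => v vin; move: (path_connect Hp vin) => /= Hc.
    by apply: (conn_tgt (P := fun u => u \notin z |: S) Hc) aZ => u w /and3P [].
  have hp : path g a p by apply: sub_path Hp => u w /andP [].
  case hp' : (path g' a p).
    have := HS a b aA bB aS bS; rewrite Hb; apply/negP/negPn.
    apply/connectP; exists p => //; apply: path_avoid => //.
    by apply: sub_all Hall => u; rewrite in_setU1 negb_or => /andP [].
  by have := allP Hall z (Hz p a hp (negbT hp')); rewrite setU11.
have nonp p a : path g a p -> ~~ path g' a p -> x \in a :: p /\ y \in a :: p.
  elim: p a => [|b p IHp] a //= /andP [gab hp]; rewrite gab /= negb_and.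
  case/orP => [|/(IHp b hp) [xin yin]]; last by split; rewrite in_cons ?xin ?yin orbT.
  by rewrite negbK => /eqP [-> ->]; rewrite !inE !eqxx orbT.
have sepX := sepU x (fun p a h1 h2 => (nonp p a h1 h2).1).
have sepY := sepU y (fun p a h1 h2 => (nonp p a h1 h2).2).
have kX := Hs _ sepX; have kY := Hs _ sepY.
rewrite cardsU1 in kX; rewrite cardsU1 in kY.
have xS : x \notin S by case: (x \in S) kX => //=; rewrite add0n leqNgt ltS.
have yS : y \notin S by case: (y \in S) kY => //=; rewrite add0n leqNgt ltS.
have Hk : #|S|.+1 = k by apply/eqP; rewrite eqn_leq ltS; rewrite xS in kX.
have [ps [sps wps dps]] : exists ps, [/\ size ps = k, all (walk g' A (x |: S)) ps & dfam ps].
  apply: IH irr' hn' _ => C HC; apply: Hs => a b aA bB aC bC; apply/negP => /connectP [p Hp Hb].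
  have hp : path g a p by apply: sub_path Hp => u w /and3P [].
  have Hall : all (fun v => v \notin C) (a :: p).
    apply/allP => v vin; move: (path_connect Hp vin) => /= Hc.
    by apply: (conn_tgt (P := fun u => u \notin C) Hc) aC => u w /and3P [].
  case Hh : (has (fun v => v \in x |: S) (a :: p)); last first.
    have := sepX a b aA bB; rewrite Hb.
    have aX : a \notin x |: S by apply/negP => ax; rewrite /= ax in Hh.
    have lX : last a p \notin x |: S.
      by apply/negP => lx; move/negbT/hasPn: Hh => /(_ _ (mem_last a p)); rewrite lx.
    move=> /(_ aX lX) /negP; apply; apply/connectP; exists p => //.
    apply: path_avoid => //; apply/allP => v vin; exact: (hasPn (negbT Hh)) v vin.
  have [s sX [q Hq Hl]] := first_hit Hp Hh.
  have Hc : connect (avoid g C) a s.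
    rewrite -Hl; apply/connectP; exists q => //; apply: sub_path Hq => u w /andP [] //.
  have sC : s \notin C.
    apply: (@conn_tgt (avoid g C) (fun u => u \notin C) a s Hc) aC.
    by move=> u w /and3P [].
  have := HC a s aA sX aC sC; apply/negP/negPn; apply/connectP; exists q => //.
  apply: sub_path Hq => u w /andP [/and3P [guw uC wC] uX]; rewrite /avoid /= uC wC guw /= andbT.
  apply/negP => /eqP [ux _]; by rewrite ux setU11 in uX.
have [qs [sqs wqs dqs]] : exists qs, [/\ size qs = k, all (walk g' (y |: S) B) qs & dfam qs].
  apply: IH irr' hn' _ => C HC; apply: Hs => a b aA bB aC bC; apply/negP => /connectP [p Hp Hb].
  have hp : path g a p by apply: sub_path Hp => u w /and3P [].
  have Hall : all (fun v => v \notin C) (a :: p).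
    apply/allP => v vin; move: (path_connect Hp vin) => /= Hc.
    by apply: (conn_tgt (P := fun u => u \notin C) Hc) aC => u w /and3P [].
  case Hh : (has (fun v => v \in y |: S) (a :: p)); last first.
    have := sepY a b aA bB; rewrite Hb.
    have aX : a \notin y |: S by apply/negP => ax; rewrite /= ax in Hh.
    have lX : last a p \notin y |: S.
      by apply/negP => lx; move/negbT/hasPn: Hh => /(_ _ (mem_last a p)); rewrite lx.
    move=> /(_ aX lX) /negP; apply; apply/connectP; exists p => //.
    apply: path_avoid => //; apply/allP => v vin; exact: (hasPn (negbT Hh)) v vin.
  have [s sY [q Hq Hl]] := last_hit Hp Hh.
  have Hc : connect (avoid g C) s b.
    rewrite Hb -Hl; apply/connectP; exists q => //; apply: sub_path Hq => u w /andP [] //.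
  have sC : s \notin C.
    apply: (@conn_src (avoid g C) (fun u => u \notin C) s b Hc) bC.
    by move=> u w /and3P [].
  have := HC s b sY bB sC bC; apply/negP/negPn; rewrite Hb -Hl.
  apply/connectP; exists q => //.
  apply: sub_path Hq => u w /andP [/and3P [guw uC wC] wX]; rewrite /avoid /= uC wC guw /= andbT.
  apply/negP => /eqP [_ wy]; by rewrite wy setU11 in wX.
pose PX := (fun v => v \in x |: S); pose PY := (fun v => v \in y |: S).
have subP p : {subset trimP PX p <= p}.
  case: p => // a q v; rewrite !inE => /orP [->//|/pref_sub ->]; by rewrite orbT.
have subQ p : {subset trimQ PY p <= p}.
  case: p => // a q v; rewrite !inE => /orP [/eqP ->|/suf_sub ->]; last by rewrite orbT.
  by have := suf_headin PY a q; rewrite inE.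
apply: (@glue g g' A B S x y k (map (trimP PX) ps) (map (trimQ PY) qs)) => //.
- by rewrite size_map.
- apply/allP => _ /mapP [p pin ->]; move: (allP wps p pin).
  case: p pin => // a q _ /and3P [hp aA lX] /=.
  rewrite pref_path // aA /=; apply: pref_last; apply/hasP; exists (last a q) => //.
  exact: mem_last.
- exact: dfam_map.
- apply/allP => _ /mapP [p pin ->]; case: p pin => // a q _ /=; exact: pref_belast.
- by rewrite size_map.
- apply/allP => _ /mapP [p pin ->]; move: (allP wqs p pin).
  case: p pin => // a q _ /and3P [hp aY lB] /=.
  rewrite suf_path // suf_last lB andbT; apply: suf_head => /=; by rewrite /PY aY.
- exact: dfam_map.
- apply/allP => _ /mapP [p pin ->]; case: p pin => // a q _ /=.
  by apply/allP => v vin; apply/negP => vY; move: (suf_nohas PY a q) => /hasPn /(_ v vin); rewrite /PY vY.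
Qed.

End Menger.
Section Fan.
Variables (T : finType) (e : rel T) (f : nat).
Hypothesis irr : irreflexive e.

Definition fam (F X : {set T}) y := exists ps : seq (seq T),
  [/\ f.+1 <= size ps, all (fun p => Xy_path e X y p && excludes F p) ps & disjoint_paths y ps].

Lemma pigeon z (C : {set T}) (ps : seq (seq T)) : f.+1 <= size ps -> disjoint_paths z ps ->
  z \notin C -> #|C| <= f -> exists2 p, p \in ps & ~~ has (fun v => v \in C) p.
Proof.
move=> Hs Hd zC HC.
case: (boolP (all (fun p => has (fun v => v \in C) p) ps)); last first.
  by move/allPn => [p pin Hp]; exists p.
move=> Hall; exfalso.
pose n := size ps.
pose c (i : 'I_n) := nth z (filter (fun v => v \in C) (nth [::] ps i)) 0.
have cP i : c i \in C /\ c i \in nth [::] ps i.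
  have : c i \in filter (fun v => v \in C) (nth [::] ps i).
    apply: mem_nth; rewrite lt0n size_eq0 -has_filter.
    exact: (allP Hall _ (mem_nth [::] (ltn_ord i))).
  by rewrite mem_filter => /andP [].
have cinj : injective c.
  move=> i j cij; apply: val_inj; apply/eqP; case: ltngtP => // lt; exfalso.
  - have := Hd i j; rewrite lt ltn_ord => /(_ isT (c i) (cP i).2); rewrite cij => /(_ (cP j).2) E.
    by move: (cP i).1; rewrite cij E (negbTE zC).
  - have := Hd j i; rewrite lt ltn_ord => /(_ isT (c j) (cP j).2); rewrite -cij => /(_ (cP i).2) E.
    by move: (cP i).1; rewrite E (negbTE zC).
have : #|[set c i | i in 'I_n]| <= #|C|.
  by apply: subset_leq_card; apply/subsetP => _ /imsetP [i _ ->]; exact: (cP i).1.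
rewrite card_imset // card_ord => H.
by have := leq_trans Hs (leq_trans H HC); rewrite ltnn.
Qed.

Section Z.
Variables (F : {set T}) (z : T).
Definition gz : rel T := [rel u v | [&& e u v, u \notin F, v \notin F, u != z & v != z]].
Definition Nz : {set T} := [set w | [&& e w z, w \notin F & w != z]].

Lemma pathz (C : {set T}) a p : path e a p -> all (fun v => v \notin F) (a :: p) ->
  ~~ has (fun v => v \in C :\ z) (a :: p) -> a != z -> z \in a :: p ->
  exists2 w, w \in Nz & (w \notin C) && connect (avoid gz C) a w.
Proof.
elim: p a => [|b p IH] a /=.
  by move=> _ _ _ az; rewrite inE eq_sym (negbTE az).
move=> /andP [eab hp] /and3P [aF bF allF]; rewrite !negb_or => /and3P [aC bC hC] az.
have aC' : a \notin C by move: aC; rewrite in_setD1 az.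
case: (eqVneq b z) => [bz|bz] zin.
  exists a; first by rewrite inE aF az -bz eab.
  by rewrite aC' connect0.
have h1 : all (fun v => v \notin F) (b :: p) by rewrite /= bF.
have h2 : ~~ has (fun v => v \in C :\ z) (b :: p) by rewrite /= negb_or bC.
have h3 : z \in b :: p by move: zin; rewrite in_cons eq_sym (negbTE az).
have [w wN /andP [wC Hc]] := IH b hp h1 h2 bz h3.
exists w => //; rewrite wC /=; apply: (connect_trans _ Hc); apply: connect1.
have bC' : b \notin C by move: bC; rewrite in_setD1 bz.
by rewrite /avoid /gz /= eab aF bF az bz aC' bC'.
Qed.
End Z.


Lemma fan_trans (F B W : {set T}) z : z \notin F -> z \notin B -> z \notin W -> [disjoint B & F] ->
  (forall x, x \in W -> fam F B x) -> fam F (B :|: W) z -> fam F B z.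
Proof.
move=> zF zB zW BF HW [ps0 [s0 a0 d0]].
have irrg : irreflexive (gz F z) by move=> u; rewrite /gz /= irr.
have [ps [sps wps dps]] : exists ps, [/\ size ps = f.+1, all (walk (gz F z) B (Nz F z)) ps & dfam ps].
  apply: (@menger _ (nedges (gz F z))) => // C HC; rewrite leqNgt; apply/negP => Cle.
  have C'le : #|C :\ z| <= f by apply: leq_trans (subset_leq_card (subD1set C z)) Cle.
  have zC' : z \notin C :\ z by rewrite !inE eqxx.
  have contra b p : b \in B -> path e b p -> all (fun v => v \notin F) (b :: p) ->
      ~~ has (fun v => v \in C :\ z) (b :: p) -> z \in b :: p -> False.
    move=> bB hp hF hC zin.
    have bz : b != z by apply/eqP => E; rewrite -E bB in zB.
    have [w wN /andP [wC Hc]] := pathz hp hF hC bz zin.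
    have bC : b \notin C by move: (hC); rewrite /= negb_or in_setD1 bz /= => /andP [].
    by have := HC b w bB wN bC wC; rewrite Hc.
  have [p pin hp] := pigeon s0 d0 zC' C'le.
  have /andP [/and3P [Hd Hh Hl] Hx] := allP a0 p pin.
  case: p pin Hd Hh Hl Hx hp => // x0 q pin /andP [hq _] /= x0BW /eqP lz Hx hC.
  have x0z : x0 != z by apply/eqP => E; move: x0BW; rewrite E in_setU (negbTE zB) (negbTE zW).
  have zin : z \in x0 :: q by rewrite -lz mem_last.
  case/setUP: x0BW => [x0B|x0W].
    exact: contra x0B hq Hx hC zin.
  have x0C : x0 \notin C by move: (hC); rewrite /= negb_or in_setD1 x0z /= => /andP [].
  have [ps1 [s1 a1 d1]] := HW x0 x0W.
  have [R Rin hR] := pigeon s1 d1 x0C Cle.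
  have /andP [/and3P [HdR HhR HlR] HxR] := allP a1 R Rin.
  case: R Rin HdR HhR HlR HxR hR => // b r _ /andP [hr _] /= bB /eqP lr HxR hR.
  have zq : z \in q by move: zin; rewrite in_cons eq_sym (negbTE x0z).
  apply: (contra b (r ++ q) bB).
  - by rewrite cat_path hr lr hq.
  - move: HxR Hx; rewrite /excludes /= all_cat => /andP [-> ->] /andP [_ ->] //.
  - rewrite -cat_cons has_cat negb_or; apply/andP; split.
      apply/hasPn => v vin; rewrite in_setD1 negb_and; apply/orP; right.
      exact: (hasPn (hR : ~~ has (fun v => v \in C) (b :: r))) v vin.
    by move: hC; rewrite /= negb_or => /andP [].
  - by rewrite -cat_cons mem_cat zq orbT.
pose conv (p : seq T) := if p is b :: q then b :: rcons (shorten b q) z else [::].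
have convmem p v : p \in ps -> v \in conv p -> v = z \/ v \in p.
  move=> pin; move: (allP wps p pin); case: p pin => // b q _ /and3P [hq _ _].
  rewrite /conv; case: (shortenP hq) => q' _ _ sq'.
  move=> H; have : v \in z :: b :: q' by rewrite -mem_rcons rcons_cons.
  case/predU1P => [->|]; first by left.
  case/predU1P => [->|vq]; first by right; exact: mem_head.
  by right; rewrite in_cons (sq' v vq) orbT.
exists (map conv ps); split.
- by rewrite size_map sps.
- apply/allP => _ /mapP [p pin ->]; move: (allP wps p pin).
  case: p pin => // b q _ /and3P [hq bB]; rewrite /conv.
  case: (shortenP hq) => q' hq' uq' _ lN.
  have hz : all (fun v => v != z) q'.
    by apply: (path_all_tgt hq') => u v /and5P [].
  have hF : all (fun v => v \notin F) q'.
    by apply: (path_all_tgt hq') => u v /and5P [].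
  have bz : b != z by apply/eqP => E; rewrite -E bB in zB.
  move: lN; rewrite inE => /and3P [elz _ _].
  rewrite /Xy_path /dpath /excludes /= last_rcons eqxx bB andbT.
  rewrite rcons_path elz andbT (sub_path _ hq'); last by move=> u v /and5P [].
  move/andP: uq' => [bq' uq''].
  rewrite mem_rcons in_cons negb_or bz bq' rcons_uniq (uq'' : uniq q') andbT /=.
  rewrite all_rcons zF hF (disjointFr BF bB) /= andbT.
  rewrite andbT; apply/negP => zq; have := allP hz z zq; by rewrite eqxx.
- move=> i j /andP [ij]; rewrite size_map => jsz v.
  have isz : i < size ps by apply: ltn_trans ij jsz.
  rewrite !(nth_map [::]) //.
  move=> /(convmem _ _ (mem_nth [::] isz)) [//|vi] /(convmem _ _ (mem_nth [::] jsz)) [//|vj].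
  have := (pairwiseP [::] dps) i j; rewrite !inE => /(_ isz jsz ij) D.
  by rewrite (disjointFr D vi) in vj.
Qed.

End Fan.
Lemma disj_sets (T : finType) (X Y : {set T}) :
  (forall x, x \in X -> x \in Y -> False) -> [disjoint X & Y].
Proof.
move=> H; rewrite disjoint_subset; apply/subsetP => x xX; rewrite inE; apply/negP => xY.
exact: H x xX xY.
Qed.

Theorem claim1 (T : finType) (e : rel T) (f : nat)
  (Hloop : irreflexive e)
  (HV : 2 <= #|T|)
  (Hf : 0 < f)
  (Hcond : forall X Y Z : {set T},
      [disjoint X & Y] -> [disjoint X & Z] -> [disjoint Y & Z] ->
      X :|: Y :|: Z = setT ->
      X != set0 -> Y != set0 -> #|Z| <= f ->
      reach e f Z X Y \/ reach e f Z Y X)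
  (F A B : {set T})
  (HF : #|F| <= f)
  (HAB : [disjoint A & B]) (HABF : A :|: B = ~: F)
  (HA0 : A != set0) (HB0 : B != set0)
  (HAreachB : reach e f F A B) :
  [/\ (~ reach e f F B A ->
        exists S : {set T},
          [/\ S != set0, S \subset A,
              reach e f F S (~: F :\: S) &
              strongly_connected_minus e F S]),
      (reach e f F B A ->
        exists S : {set T},
          [/\ S != set0, S \subset A :|: B,
              reach e f F S (~: F :\: S),
              strongly_connected_minus e F S &
              reach e f F A (S :\: A)]) &
      (forall v, v \in F -> f.+1 <= #|[set u | (u \notin F) && e u v]|)].
Proof.
have memAB x : (x \in A) || (x \in B) = (x \notin F) by rewrite -in_setU HABF inE.
have nAB x : x \in A -> x \notin B by move=> xA; rewrite (disjointFr HAB xA).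
have AF x : x \in A -> x \notin F by move=> xA; rewrite -memAB xA.
have BF x : x \in B -> x \notin F by move=> xB; rewrite -memAB xB orbT.
have reachB y : y \in B -> fam e f F A y.
  case: HAreachB => [B0|H] yB; last exact: H.
  by move: HB0; rewrite B0 eqxx.
have headin (X : {set T}) y p : Xy_path e X y p -> head y p \in p /\ head y p \in X.
  by case: p => // a p /and3P [_ aX _]; rewrite mem_head.
have part3 : forall v, v \in F -> f.+1 <= #|[set u | (u \notin F) && e u v]|.
  move=> v vF; set N := [set u | (u \notin F) && e u v].
  rewrite leqNgt; apply/negP; rewrite ltnS => Nle.
  have [b bB] := set0Pn B HB0.
  have Abig : f < #|A|.
    rewrite ltnNge; apply/negP => Ale.
    have [ps [s d Hd]] := reachB b bB.
    have bA : b \notin A by apply/negP => bA; by rewrite (negbTE (nAB b bA)) in bB.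
    have [p pin hp] := pigeon s Hd bA Ale.
    have /andP [/headin [h1 h2] _] := allP d p pin.
    by move/hasPn: hp => /(_ _ h1); rewrite h2.
  have FB : #|A| < #|~: F|.
    rewrite -HABF cardsU (disjoint_setI0 HAB) cards0 subn0 -addn1 leq_add2l card_gt0 //.
  set Y := ~: (v |: N).
  have vN : v \notin N by rewrite inE vF.
  have Yne : Y != set0.
    apply/negP => /eqP Y0.
    have : ~: F \subset N.
      apply/subsetP => u uF; have : u \notin Y by rewrite Y0 inE.
      rewrite !inE negbK => /orP [/eqP uv|//]; by move: uF; rewrite inE uv vF.
    move/subset_leq_card => H; have := leq_trans FB (leq_trans H Nle).
    by rewrite ltnNge (ltnW Abig).
  have H3 : reach e f N [set v] Y \/ reach e f N Y [set v].
    apply: Hcond.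
  - by apply: disj_sets => x; rewrite !inE => /eqP ->; rewrite eqxx.
  - by apply: disj_sets => x; rewrite !inE => /eqP ->; rewrite vF.
  - by apply: disj_sets => x; rewrite !inE negb_or => /andP [_ /negP].
  - by apply/setP => x; rewrite !inE; case: (x == v); case: ((x \notin F) && e x v).
  - by apply/set0Pn; exists v; rewrite inE.
  - exact: Yne.
  - exact: Nle.
  case: H3 => H.
  - case: H => [Y0|H]; first by move: Yne; rewrite Y0 eqxx.
    have [y yY] := set0Pn Y Yne.
    have [ps [s d Hd]] := H y yY.
    have s1 : 1 < size ps by apply: leq_trans s; rewrite ltnS.
    have /andP [/headin [h0 h0v] _] := allP d _ (mem_nth [::] (ltnW s1)).
    have /andP [/headin [h1 h1v] _] := allP d _ (mem_nth [::] s1).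
    move: h0v h1v; rewrite !inE => /eqP E0 /eqP E1.
    rewrite E0 in h0; rewrite E1 in h1.
    have := Hd 0 1 s1 v h0 h1 => yv.
    by move: yY; rewrite -yv !inE eqxx.
  - case: H => [Y0|H]; first by move: (set11 v); rewrite Y0 inE.
    have [ps [s d Hd]] := H v (set11 v).
    have vF' : v \notin F :\ v by rewrite !inE eqxx.
    have Fle : #|F :\ v| <= f by apply: leq_trans (subset_leq_card (subD1set F v)) HF.
    have [p pin hp] := pigeon s Hd vF' Fle.
    have /andP [/and3P [Hdp Hh Hl] Hx] := allP d p pin.
    case: p pin Hdp Hh Hl Hx hp => // x q _ /andP [hq _] /= xY /eqP lv Hx hp.
    have xv : x != v by apply/eqP => E; move: xY; rewrite E !inE eqxx.
    case/lastP: q hq lv Hx hp => [|q1 w] hq lv Hx hp.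
      by move: xv; rewrite -lv eqxx.
    rewrite last_rcons in lv; subst w.
    move: hq; rewrite rcons_path => /andP [_ euv].
    set u := last x q1 in euv.
    have uin : u \in x :: rcons q1 v.
      have : u \in rcons (x :: q1) v by rewrite mem_rcons in_cons mem_last orbT.
      by [].
    have uN : u \notin N := allP (Hx : all (fun w => w \notin N) (x :: rcons q1 v)) u uin.
    have uF : u \in F by move: uN; rewrite inE euv andbT negbK.
    have uv : u = v.
      case: (eqVneq u v) => // uv; exfalso.
      move/hasPn: (hp : ~~ has (fun w => w \in F :\ v) (x :: rcons q1 v)) => /(_ u uin).
      by rewrite !inE uv uF.
    by move: euv; rewrite uv Hloop.
pose hF := [rel u v | [&& e u v, u \notin F & v \notin F]].
have [r0 r0A] := set0Pn A HA0.
have r0F : r0 \in ~: F by rewrite inE AF.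
have [r rF rmin] := @arg_minnP T r0 (fun x => x \in ~: F) (fun r => #|[set u | connect hF u r]|) r0F.
set S0 := [set u | connect hF u r].
have rS0 : r \in S0 by rewrite inE connect0.
have S0ne : S0 != set0 by apply/set0Pn; exists r.
have S0F u : u \in S0 -> u \notin F.
  rewrite inE => Hc; apply: (@conn_src _ hF (fun u => u \notin F) u r Hc).
    by move=> a b /and3P [].
  by rewrite inE in rF.
have closed u w : connect hF w u -> u \in S0 -> w \in S0.
  by move=> Hc; rewrite !inE; apply: connect_trans.
have back u : u \in S0 -> connect hF r u.
  move=> uS0; set Su := [set w | connect hF w u].
  have sub : Su \subset S0 by apply/subsetP => w; rewrite inE => Hw; exact: closed Hw uS0.
  have := rmin u; rewrite inE (S0F u uS0) => /(_ isT) le.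
  have /eqP E : Su == S0 by rewrite eqEcard sub le.
  by move: rS0; rewrite -E inE.
have sc (S : {set T}) : S \subset S0 -> strongly_connected_minus e F S.
  move=> /subsetP sub i j iS jS; have := sub i iS; rewrite inE => ir.
  exact: connect_trans ir (back j (sub j jS)).
have srcp (X : {set T}) y p : y \in S0 -> Xy_path e X y p -> excludes F p -> head y p \in S0.
  case: p => // x q yS0 /and3P [/andP [hq _] _ /eqP lq] ex /=.
  apply: (closed y) yS0; rewrite -lq; apply/connectP; exists q => //.
  exact: path_avoid hq ex.
have nosrc (X : {set T}) y : y \in S0 -> fam e f F X y -> exists2 x, x \in X & x \in S0.
  move=> yS0 [ps [s d _]]; case: ps s d => // p ps _ /= /andP [/andP [Hp Hx] _].
  exists (head y p); first by have [] := headin _ _ _ Hp.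
  exact: srcp Hp Hx.
have reachS0 : reach e f F S0 (~: F :\: S0).
  case: (eqVneq (~: F :\: S0) set0) => [->|Yne]; first by left.
  have H3 : reach e f F S0 (~: F :\: S0) \/ reach e f F (~: F :\: S0) S0.
    apply: Hcond => //.
    - by apply: disj_sets => x; rewrite !inE => ->.
    - by apply: disj_sets => x /S0F /negbTE ->.
    - by apply: disj_sets => x; rewrite !inE => /andP [_ /negbTE ->].
    - by apply/setP => x; rewrite !inE; case: (connect hF x r); case: (x \in F).
  case: H3 => // -[S00|H]; first by move: S0ne; rewrite S00 eqxx.
  have [x] := nosrc _ _ rS0 (H r rS0); by rewrite !inE => /andP [/negbTE ->].
split => //.
-
  move=> nBA; set A1 := S0 :&: A.
  have A1ne : A1 != set0.
    apply/negP => /eqP A10.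
    have rA : r \notin A.
      apply/negP => rA; have : r \in A1 by rewrite in_setI rS0 rA.
      by rewrite A10 inE.
    have rB : r \in B.
      move: (memAB r); rewrite (negbTE rA) /= => ->; by rewrite inE in rF.
    have [x xA xS0] := nosrc _ _ rS0 (reachB r rB).
    have : x \in A1 by rewrite in_setI xA xS0.
    by rewrite A10 inE.
  exists A1; split => //.
  + exact: subsetIr.
  + case: (eqVneq (~: F :\: A1) set0) => [->|Yne]; first by left.
    have H3 : reach e f F A1 (~: F :\: A1) \/ reach e f F (~: F :\: A1) A1.
      apply: Hcond => //.
      - by apply: disj_sets => x xA1; rewrite in_setD xA1.
      - by apply: disj_sets => x; rewrite in_setI => /andP [_ /AF xF] xF'; rewrite xF' in xF.
      - by apply: disj_sets => x; rewrite in_setD in_setC => /andP [_ xF] xF'; rewrite xF' in xF.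
      - by apply/setP => x; rewrite !in_setU in_setD in_setC in_setT; case: (x \in A1); case: (x \in F).
    case: H3 => // H; exfalso; apply: nBA; right => a aA.
    have HBA1 x : x \in A1 -> fam e f F B x.
      move=> xA1; case: H => [A10|H]; first by move: A1ne; rewrite A10 eqxx.
      have [ps [s d Hd]] := H x xA1; exists ps; split => //.
      apply/allP => p pin; have /andP [Hp Hx] := allP d p pin.
      have xS0 : x \in S0 by move: xA1; rewrite in_setI => /andP [].
      have hS0 := srcp _ _ _ xS0 Hp Hx.
      move: Hp Hx hS0; case: p pin => // y q _ /and3P [Hd' /= yY Hl] Hx yS0.
      rewrite /Xy_path Hd' Hl Hx /= andbT.
      move: yY; rewrite in_setD in_setI yS0 /= in_setC => /andP [yA yF].
      by rewrite andbT; move: (memAB y); rewrite (negbTE yA) yF /= => ->.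
    case aS0: (a \in S0).
      by apply: HBA1; rewrite in_setI aS0 aA.
    set A2 := A :\: S0.
    set X' := ~: F :\: A2.
    have aA2 : a \in A2 by rewrite in_setD aS0 aA.
    have rX' : r \in X' by rewrite in_setD rF in_setD rS0.
    have H4 : reach e f F X' A2 \/ reach e f F A2 X'.
      apply: Hcond => //.
      - by apply: disj_sets => x; rewrite in_setD => /andP [xA _] xA'; rewrite xA' in xA.
      - by apply: disj_sets => x; rewrite in_setD in_setC => /andP [_ xF] xF'; rewrite xF' in xF.
      - by apply: disj_sets => x; rewrite in_setD => /andP [_ /AF xF] xF'; rewrite xF' in xF.
      - apply/setP => x; rewrite !in_setU !in_setD in_setC in_setT.
        by case: (x \in S0); case: (x \in A); case: (x \in F).
      - by apply/set0Pn; exists r.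
      - by apply/set0Pn; exists a.
    case: H4 => H4.
    * case: H4 => [A20|H4]; first by move: aA2; rewrite A20 inE.
      have Hfam := H4 a aA2.
      have EX : X' = B :|: A1.
        apply/setP => x; rewrite !in_setU !in_setD !in_setI in_setC.
        move: (memAB x) (@nAB x).
        by case: (x \in A); case: (x \in B); case: (x \in F); case: (x \in S0) => //=; move=> _ HH; by have := HH isT.
      rewrite EX in Hfam.
      apply: (@fan_trans T e f Hloop F B A1 a) => //.
      - exact: AF.
      - exact: nAB.
      - by rewrite in_setI aS0.
      - by apply: disj_sets => x /BF xF xF'; rewrite xF' in xF.
    * case: H4 => [X0|H4]; first by move: rX'; rewrite X0 inE.
      have [x xA2 xS0] := nosrc _ _ rS0 (H4 r rX').
      by move: xA2; rewrite in_setD xS0.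
  + apply: sc; exact: subsetIl.
-
  move=> _; exists S0; split => //.
  + by apply/subsetP => u /S0F; rewrite HABF inE.
  + by apply: sc.
  + right => y; rewrite inE => /andP [yA yS0].
    apply: reachB; move: (memAB y); rewrite (negbTE yA) (S0F y yS0) /=; by move=> ->.
Qed.
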